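(* Let $n\ge1$, $m\ge0$, $a,b>0$, $I_{m,n,s}(x)=\int_s^x(1+t)^nt^m\,dt$, $\mu_s=\frac{(1+a)^na^mb+nI_{m,n-1,s}(a)}{I_{m,n,s}(a)}$ and $\tilde\psi_s(x)=\frac{\mu_sI_{m,n,s}(x)-nI_{m,n-1,s}(x)}{(1+x)^nx^m}$. Assume $\mu_0\le n$ and let $\lambda\in[0,a)$ be the unique solution of $\mu_\lambda(1+\lambda)=n$. Then $\tilde\psi_\lambda$ is convex on $(0,\infty)$. In particular, for all $x\in[\lambda,a]$, $\frac{b}{a}x\ge\tilde\psi_\lambda(x)$. *)

(* Defs.v *)
From Stdlib Require Import Reals Lra.
From Coquelicot Require Import Coquelicot.
Open Scope R_scope.

Definition Iint (m n : nat) (s x : R) : R :=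
  RInt (fun t => (1 + t) ^ n * t ^ m) s x.

Definition mu (m n : nat) (a b s : R) : R :=
  ((1 + a) ^ n * a ^ m * b + INR n * Iint m (n - 1) s a) / Iint m n s a.

Definition psi_tilde (m n : nat) (a b s x : R) : R :=
  (mu m n a b s * Iint m n s x - INR n * Iint m (n - 1) s x)
  / ((1 + x) ^ n * x ^ m).

(* f is convex on the set D (D assumed convex, as for intervals) *)
Definition convex_on (f : R -> R) (D : R -> Prop) : Prop :=
  forall x y t, D x -> D y -> 0 <= t <= 1 ->
    f (t * x + (1 - t) * y) <= t * f x + (1 - t) * f y.

(* Main.v *)
Require Import Defs.
From Stdlib Require Import Reals Lra Lia.
From Coquelicot Require Import Coquelicot.
Open Scope R_scope.
Lemma is_derive_cont f x l : is_derive f x l -> continuity_pt f x.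
Proof. intros H. apply continuity_pt_filterlim.
  apply (@ex_derive_continuous R_AbsRing R_NormedModule f). exists l; exact H. Qed.

Lemma mvt_le f df a b : a <= b ->
  (forall x, a <= x <= b -> is_derive f x (df x)) ->
  exists c, a <= c <= b /\ f b - f a = df c * (b - a).
Proof. intros Hab Hd.
  destruct (MVT_gen f a b df) as [c [Hc E]].
  - intros x Hx. rewrite Rmin_left in Hx by lra. rewrite Rmax_right in Hx by lra. apply Hd; lra.
  - intros x Hx. rewrite Rmin_left in Hx by lra. rewrite Rmax_right in Hx by lra.
    apply is_derive_cont with (df x). apply Hd; lra.
  - exists c. rewrite Rmin_left in Hc by lra. rewrite Rmax_right in Hc by lra. auto.
Qed.

Lemma convex_from_d2 f f1 f2 :
  (forall x, 0 < x -> is_derive f x (f1 x)) ->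
  (forall x, 0 < x -> is_derive f1 x (f2 x)) ->
  (forall x, 0 < x -> 0 <= f2 x) -> convex_on f (fun x => 0 < x).
Proof. intros H1 H2 H3.
  assert (mono : forall x y, 0 < x -> x <= y -> f1 x <= f1 y).
  { intros x y Hx Hxy. destruct (mvt_le f1 f2 x y Hxy) as [c [Hc E]].
    - intros z Hz. apply H2. lra.
    - assert (0 <= f2 c) by (apply H3; lra). nra. }
  assert (key : forall x y t, 0 < x -> x < y -> 0 <= t <= 1 ->
      f (t * x + (1 - t) * y) <= t * f x + (1 - t) * f y).
  { intros x y t Hx Hxy Ht. set (z := t * x + (1 - t) * y).
    assert (Hz : x <= z <= y) by (unfold z; nra).
    destruct (mvt_le f f1 x z) as [c1 [Hc1 E1]]; [lra| intros u Hu; apply H1; lra |].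
    destruct (mvt_le f f1 z y) as [c2 [Hc2 E2]]; [lra| intros u Hu; apply H1; lra |].
    assert (M : f1 c1 <= f1 c2) by (apply mono; lra).
    assert (Ez1 : z - x = (1 - t) * (y - x)) by (unfold z; ring).
    assert (Ez2 : y - z = t * (y - x)) by (unfold z; ring).
    assert (Id : t * f x + (1 - t) * f y - f z = t * (1 - t) * (y - x) * (f1 c2 - f1 c1)).
    { replace (t * f x + (1 - t) * f y - f z) with (- t * (f z - f x) + (1 - t) * (f y - f z)) by ring.
      rewrite E1, E2, Ez1, Ez2. ring. }
    assert (0 <= t * (1 - t) * (y - x) * (f1 c2 - f1 c1)).
    { apply Rmult_le_pos; [apply Rmult_le_pos; [apply Rmult_le_pos|]|]; lra. }
    lra. }
  intros x y t Hx Hy Ht.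
  destruct (Rtotal_order x y) as [Hxy|[Hxy|Hxy]].
  - apply key; auto.
  - subst y. replace (t * x + (1 - t) * x) with x by ring. lra.
  - replace (t * x + (1 - t) * y) with ((1 - t) * y + (1 - (1 - t)) * x) by ring.
    pose proof (key y x (1 - t) Hy Hxy ltac:(lra)). lra.
Qed.
Lemma pow_deriv m x : x <> 0 -> is_derive (fun y => y^m) x (INR m * x^m / x).
Proof. intros. destruct m.
- simpl. auto_derive; auto. field; auto.
- auto_derive. auto. change (match m with 0%nat => 1 | S _ => INR m + 1 end) with (INR (S m)). rewrite <- tech_pow_Rmult. field. auto.
Qed.
Lemma dRInt (f : R -> R) s x : (forall t, ex_derive f t) ->
  is_derive (fun y => RInt f s y) x (f x).
Proof. intros Hf. apply is_derive_RInt with (a:=s).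
- exists (mkposreal 1 Rlt_0_1). intros y _. apply RInt_correct.
  apply ex_RInt_continuous. intros; apply (@ex_derive_continuous R_AbsRing R_NormedModule f); auto.
- apply (@ex_derive_continuous R_AbsRing R_NormedModule f); auto.
Qed.

Lemma is_derive_change (f g : R -> R) (x l l' : R) :
  (forall t, f t = g t) -> l = l' -> is_derive f x l -> is_derive g x l'.
Proof. intros E El H. subst l'. eapply is_derive_ext; [exact E| exact H]. Qed.

Lemma mvt_open f df a b : a <= b ->
  (forall x, a < x < b -> is_derive f x (df x)) ->
  (forall x, a <= x <= b -> continuity_pt f x) ->
  exists c, a <= c <= b /\ f b - f a = df c * (b - a).
Proof. intros Hab Hd Hc.
  destruct (MVT_gen f a b df) as [c [Hc' E]].
  - intros x Hx. rewrite Rmin_left in Hx by lra. rewrite Rmax_right in Hx by lra. apply Hd; lra.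
  - intros x Hx. rewrite Rmin_left in Hx by lra. rewrite Rmax_right in Hx by lra. apply Hc; lra.
  - exists c. rewrite Rmin_left in Hc' by lra. rewrite Rmax_right in Hc' by lra. auto.
Qed.

Lemma ex_derive_cont f x : ex_derive f x -> continuity_pt f x.
Proof. intros [l H]. apply is_derive_cont with l. exact H. Qed.

Section Main.
Variables (k m : nat) (mu l : R).
Let n := INR (S k).
Let M := INR m.
Definition Wf x := (1 + x) ^ (S k) * x ^ m.
Definition Nf x := mu * Iint m (S k) l x - n * Iint m k l x.
Definition rf x := n / (1 + x) + M / x.
Definition Psi x := Nf x / Wf x.
Definition dPsi x := mu * (x - l) / (1 + x) - rf x * Psi x.
Definition Uf x := (n * x + M * (1 + x)) * (x - l) - (1 + l) * x.
Definition Df x := (n * x + M * (1 + x)) ^ 2 + n * x ^ 2 + M * (1 + x) ^ 2.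
Definition cf x := rf x ^ 2 + n / (1 + x) ^ 2 + M / x ^ 2.
Definition Kf x := Psi x - mu * (x * Uf x / Df x).

Hypothesis Hmu : mu * (1 + l) = n.
Hypothesis Hl : 0 <= l.

Lemma n_pos : 0 < n.
Proof. unfold n. apply lt_0_INR. lia. Qed.
Lemma M_ge0 : 0 <= M.
Proof. unfold M. apply pos_INR. Qed.
Lemma mu_pos : 0 < mu.
Proof. pose proof n_pos. nra. Qed.

Lemma dN x : is_derive Nf x (mu * (1 + x) ^ k * x ^ m * (x - l)).
Proof.
  unfold Nf, Iint.
  apply is_derive_ext with (fun y => minus (mu * RInt (fun t => (1 + t) ^ S k * t ^ m) l y)
     (n * RInt (fun t => (1 + t) ^ k * t ^ m) l y)); [reflexivity|].
  replace (mu * (1 + x) ^ k * x ^ m * (x - l)) with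
    (minus (mu * ((1 + x) ^ S k * x ^ m)) (n * ((1 + x) ^ k * x ^ m))).
  2:{ unfold minus, plus, opp; simpl. rewrite <- Hmu. ring. }
  apply (@is_derive_minus R_AbsRing R_NormedModule); apply is_derive_scal.
  - apply (dRInt (fun t => (1 + t) ^ S k * t ^ m)); intros; auto_derive; auto.
  - apply (dRInt (fun t => (1 + t) ^ k * t ^ m)); intros; auto_derive; auto.
Qed.

Lemma N_l : Nf l = 0.
Proof. unfold Nf, Iint. rewrite !RInt_point. unfold zero; simpl. ring. Qed.

Lemma dW x : 0 < x -> is_derive Wf x (Wf x * rf x).
Proof. intros Hx. unfold Wf.
  assert (H1 : is_derive (fun y => (1 + y) ^ S k) x (n * (1 + x) ^ S k / (1 + x))).
  { auto_derive; auto. change (match k with 0%nat => 1 | S _ => INR k + 1 end) with (INR (S k)). rewrite <- tech_pow_Rmult. unfold n. field. lra. }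
  pose proof (pow_deriv m x ltac:(lra)) as H2.
  pose proof (@is_derive_mult R_AbsRing _ _ x _ _ H1 H2 Rmult_comm) as H3.
  eapply is_derive_change; [| |apply H3]. intros; reflexivity.
  unfold rf, plus, mult, M; simpl. field. lra.
Qed.

Lemma W_pos x : 0 < x -> 0 < Wf x.
Proof. intros. unfold Wf. apply Rmult_lt_0_compat; apply pow_lt; lra. Qed.

Lemma W_pos0 x : 0 <= x -> 0 <= Wf x.
Proof. intros. unfold Wf. apply Rmult_le_pos; apply pow_le; lra. Qed.

Lemma dPsi_ok x : 0 < x -> is_derive Psi x (dPsi x).
Proof. intros Hx. pose proof (W_pos x Hx) as HW.
  pose proof (is_derive_div Nf Wf x _ _ (dN x) (dW x Hx) ltac:(lra)) as H.
  eapply is_derive_change; [| |apply H]. intros; reflexivity.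
  unfold dPsi, Psi. unfold Wf in *. rewrite <- tech_pow_Rmult.
  assert (0 < (1 + x) ^ k) by (apply pow_lt; lra).
  assert (0 < x ^ m) by (apply pow_lt; lra).
  field. repeat split; lra.
Qed.

Lemma D_pos x : 0 < x -> 0 < Df x.
Proof. intros Hx. unfold Df. pose proof n_pos. pose proof M_ge0.
  assert (0 < n * x ^ 2) by (apply Rmult_lt_0_compat; [lra| apply pow_lt; lra]).
  assert (0 <= M * (1 + x) ^ 2) by (apply Rmult_le_pos; [lra| apply pow_le; lra]).
  assert (0 <= (n * x + M * (1 + x)) ^ 2) by (apply pow2_ge_0). lra.
Qed.

Lemma ddPsi x : 0 < x -> is_derive dPsi x (cf x * Kf x).
Proof. intros Hx.
  assert (HA : is_derive (fun y => mu * (y - l) / (1 + y)) x (mu * (1 + l) / (1 + x) ^ 2)).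
  { auto_derive. lra. field. lra. }
  assert (Hr : is_derive rf x (- n / (1 + x) ^ 2 - M / x ^ 2)).
  { unfold rf. auto_derive. split; [lra|split; [lra|auto]]. field. lra. }
  pose proof (@is_derive_mult R_AbsRing _ _ x _ _ Hr (dPsi_ok x Hx) Rmult_comm) as H2.
  pose proof (@is_derive_minus R_AbsRing R_NormedModule _ _ x _ _ HA H2) as H3.
  eapply is_derive_change; [| |apply H3]. intros; reflexivity.
  pose proof (D_pos x Hx).
  unfold cf, Kf, dPsi, Uf, Df, rf, minus, plus, opp, mult in *; simpl.
  pose proof n_pos; pose proof M_ge0. unfold n, M in *.
  field. split; [|lra]. apply Rgt_not_eq.
  set (A := INR (S k) * x + INR m * (1 + x)).
  assert (0 < INR (S k) * (x * x)) by (apply Rmult_lt_0_compat; nra).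
  assert (0 <= INR m * ((1 + x) * (1 + x))) by (apply Rmult_le_pos; nra).
  assert (0 <= A * A) by nra. lra.
Qed.

Lemma N_nonneg x : 0 < x -> 0 <= Nf x.
Proof. intros Hx. pose proof mu_pos.
  destruct (Rle_lt_dec l x) as [Hlx|Hlx].
  - destruct (mvt_le Nf _ l x Hlx (fun y _ => dN y)) as [c [Hc E]].
    rewrite N_l in E.
    assert (0 <= mu * (1 + c) ^ k * c ^ m * (c - l)).
    { apply Rmult_le_pos; [|lra]. apply Rmult_le_pos; [apply Rmult_le_pos; [lra|apply pow_le; lra]|apply pow_le; lra]. }
    nra.
  - destruct (mvt_le Nf _ x l (Rlt_le _ _ Hlx) (fun y _ => dN y)) as [c [Hc E]].
    rewrite N_l in E.
    assert (0 <= mu * (1 + c) ^ k * c ^ m).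
    { apply Rmult_le_pos; [apply Rmult_le_pos; [lra|apply pow_le; lra]|apply pow_le; lra]. }
    assert (0 <= mu * (1 + c) ^ k * c ^ m * ((l - c) * (l - x))) by (apply Rmult_le_pos; nra).
    lra.
Qed.

Lemma Psi_nonneg x : 0 < x -> 0 <= Psi x.
Proof. intros Hx. unfold Psi. pose proof (W_pos x Hx). pose proof (N_nonneg x Hx).
  unfold Rdiv. apply Rmult_le_pos; [lra|]. left. apply Rinv_0_lt_compat. lra. Qed.

Definition Lf y := y * Uf y / Df y.
Definition Gf y := Nf y - mu * (Wf y * Lf y).

Lemma D_pos0 y : (1 <= m)%nat -> 0 <= y -> 0 < Df y.
Proof. intros Hm Hy. unfold Df. pose proof n_pos.
  assert (0 < M) by (unfold M; apply lt_0_INR; lia).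
  assert (0 <= n * y ^ 2) by (apply Rmult_le_pos; [lra| apply pow_le; lra]).
  assert (0 < M * (1 + y) ^ 2) by (apply Rmult_lt_0_compat; [lra| apply pow_lt; lra]).
  assert (0 <= (n * y + M * (1 + y)) ^ 2) by (apply pow2_ge_0). lra.
Qed.

Lemma dL y : 0 < Df y -> is_derive Lf y
  (((Uf y + y * ((n + M) * (y - l) + (n * y + M * (1 + y)) - (1 + l))) * Df y
    - y * Uf y * (2 * (n * y + M * (1 + y)) * (n + M) + 2 * n * y + 2 * M * (1 + y))) / Df y ^ 2).
Proof. intros HD. unfold Lf. unfold Uf, Df in *. auto_derive.
  - lra.
  - field. lra.
Qed.

Lemma dG y : 0 < y -> is_derive Gf y
  (mu * Wf y * (2 * M * y * (1 + y) * (l * (n + M + 1) + M + 1)) / Df y ^ 2).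
Proof. intros Hy. pose proof (D_pos y Hy) as HD.
  pose proof (@is_derive_mult R_AbsRing _ _ y _ _ (dW y Hy) (dL y HD) Rmult_comm) as H1.
  pose proof (is_derive_scal _ y mu _ H1) as H2.
  pose proof (@is_derive_minus R_AbsRing R_NormedModule _ _ y _ _ (dN y) H2) as H3.
  eapply is_derive_change; [| |apply H3]. intros; reflexivity.
  unfold Lf, rf, minus, plus, opp, mult; simpl.
  unfold Wf. rewrite <- tech_pow_Rmult.
  assert (0 < (1 + y) ^ k) by (apply pow_lt; lra).
  assert (0 < y ^ m) by (apply pow_lt; lra).
  unfold Df in *. unfold Uf. unfold n, M in *.
  field. repeat split; lra.
Qed.

Lemma G_cont y : (1 <= m)%nat -> 0 <= y -> continuity_pt Gf y.
Proof. intros Hm Hy. apply ex_derive_cont. pose proof (D_pos0 y Hm Hy) as HD.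
  assert (E1 : ex_derive Nf y) by (eexists; apply dN).
  assert (E2 : ex_derive (fun y => mu * (Wf y * Lf y)) y).
  { apply ex_derive_scal. unfold Wf, Lf, Uf. unfold Df in *. auto_derive. lra. }
  pose proof (@ex_derive_minus R_AbsRing R_NormedModule _ _ y E1 E2) as E3.
  eapply ex_derive_ext; [|exact E3]. intros; reflexivity.
Qed.

Definition G0 y := Nf y - mu * (Wf y * ((n * (y - l) - 1 - l) / (n * (n + 1)))).

Lemma dG0 y : m = 0%nat -> is_derive G0 y 0.
Proof. intros Hm0. pose proof n_pos.
  assert (HW : is_derive Wf y (n * (1 + y) ^ k)).
  { unfold Wf. rewrite Hm0. auto_derive; auto.
    change (match k with 0%nat => 1 | S _ => INR k + 1 end) with (INR (S k)). unfold n. ring. }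
  assert (HL : is_derive (fun y => (n * (y - l) - 1 - l) / (n * (n + 1))) y (n / (n * (n + 1)))).
  { auto_derive. nra. field. lra. }
  pose proof (@is_derive_mult R_AbsRing _ _ y _ _ HW HL Rmult_comm) as H1.
  pose proof (is_derive_scal _ y mu _ H1) as H2.
  pose proof (@is_derive_minus R_AbsRing R_NormedModule _ _ y _ _ (dN y) H2) as H3.
  eapply is_derive_change; [| |apply H3]. intros; reflexivity.
  unfold minus, plus, opp, mult; simpl. unfold Wf. rewrite Hm0. simpl pow.
  rewrite <- Hmu. pose proof mu_pos. field. rewrite Hmu. repeat split; lra.
Qed.

Lemma Kf_nonneg x : 0 < x -> 0 <= Kf x.
Proof. intros Hx. pose proof mu_pos as Hm. pose proof n_pos as Hn. pose proof M_ge0 as HM.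
  pose proof (W_pos x Hx) as HW. pose proof (D_pos x Hx) as HD.
  destruct (Rle_lt_dec x l) as [Hxl|Hxl].
  - pose proof (Psi_nonneg x Hx).
    assert (Uf x <= 0).
    { unfold Uf. assert (0 <= n * x + M * (1 + x)) by nra. nra. }
    assert (x * Uf x / Df x <= 0).
    { unfold Rdiv. assert (0 < / Df x) by (apply Rinv_0_lt_compat; lra). assert (x * Uf x <= 0) by nra. nra. }
    unfold Kf. nra.
  - destruct (Nat.eq_dec m 0) as [Hm0|Hm1].
    + destruct (mvt_le G0 (fun _ => 0) l x (Rlt_le _ _ Hxl) (fun y _ => dG0 y Hm0)) as [c [_ E]].
      assert (EK : Kf x = G0 x / Wf x).
      { unfold Kf, Psi, G0, Lf, Uf, Df. unfold M. rewrite Hm0. simpl INR.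
        field. split; [lra|]. assert (0 < n * x ^ 2) by (apply Rmult_lt_0_compat; [lra|apply pow_lt; lra]). assert (0 <= (n * x) ^ 2) by apply pow2_ge_0. lra. }
      assert (HG : 0 <= G0 l).
      { unfold G0. rewrite N_l. pose proof (W_pos0 l Hl).
        replace (n * (l - l) - 1 - l) with (- (1 + l)) by ring.
        assert (0 < n * (n + 1)) by nra.
        assert (0 <= Wf l * (1 + l) / (n * (n + 1))).
        { unfold Rdiv. apply Rmult_le_pos; [nra|]. left; apply Rinv_0_lt_compat; lra. }
        replace (0 - mu * (Wf l * (- (1 + l) / (n * (n + 1))))) with (mu * (Wf l * (1 + l) / (n * (n + 1)))) by (field; lra).
        nra. }
      rewrite EK. unfold Rdiv. apply Rmult_le_pos; [lra|]. left; apply Rinv_0_lt_compat; lra.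
    + assert (Hm1' : (1 <= m)%nat) by lia.
      destruct (mvt_open Gf _ l x (Rlt_le _ _ Hxl) (fun y Hy => dG y ltac:(lra))
          (fun y Hy => G_cont y Hm1' ltac:(lra))) as [c [Hc E]].
      assert (HDc : 0 < Df c) by (apply D_pos0; auto; lra).
      assert (Hv : 0 <= mu * Wf c * (2 * M * c * (1 + c) * (l * (n + M + 1) + M + 1)) / Df c ^ 2).
      { pose proof (W_pos0 c ltac:(lra)).
        unfold Rdiv. apply Rmult_le_pos.
        - apply Rmult_le_pos; [nra|]. apply Rmult_le_pos; [|nra].
          apply Rmult_le_pos; [|lra]. nra.
        - left. apply Rinv_0_lt_compat. apply pow_lt. lra. }
      assert (HG : 0 <= Gf l).
      { unfold Gf, Lf, Uf. rewrite N_l. pose proof (W_pos0 l Hl).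
        assert (HDl : 0 < Df l) by (apply D_pos0; auto).
        replace ((n * l + M * (1 + l)) * (l - l) - (1 + l) * l) with (- ((1 + l) * l)) by ring.
        assert (0 <= Wf l * (l * ((1 + l) * l)) / Df l).
        { unfold Rdiv. apply Rmult_le_pos; [|left; apply Rinv_0_lt_compat; lra].
          apply Rmult_le_pos; [lra|]. apply Rmult_le_pos; [lra|]. nra. }
        replace (0 - mu * (Wf l * (l * - ((1 + l) * l) / Df l))) with (mu * (Wf l * (l * ((1 + l) * l)) / Df l)) by (field; lra).
        nra. }
      assert (EK : Kf x = Gf x / Wf x).
      { unfold Kf, Psi, Gf, Lf. field. lra. }
      rewrite EK. unfold Rdiv. apply Rmult_le_pos; [|left; apply Rinv_0_lt_compat; lra].
      nra.
Qed.
End Main.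

Lemma Psi_bound k m mu0 l (Hmu : mu0 * (1 + l) = INR (S k)) (Hl : 0 <= l) y :
  l < y -> 0 < y -> Psi k m mu0 l y <= mu0 * (y - l) ^ 2.
Proof. intros Hly Hy. pose proof (mu_pos k mu0 l Hmu Hl) as Hm.
  destruct (mvt_le (Nf k m mu0 l) _ l y (Rlt_le _ _ Hly) (fun z _ => dN k m mu0 l Hmu z)) as [c [Hc E]].
  rewrite N_l in E.
  assert (H1 : (1 + c) ^ k <= (1 + y) ^ k) by (apply pow_incr; lra).
  assert (H2 : c ^ m <= y ^ m) by (apply pow_incr; lra).
  assert (H3 : 0 <= (1 + c) ^ k) by (apply pow_le; lra).
  assert (H4 : 0 <= c ^ m) by (apply pow_le; lra).
  assert (H5 : (1 + c) ^ k * c ^ m <= (1 + y) ^ k * y ^ m) by (apply Rmult_le_compat; lra).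
  assert (H6 : (1 + c) ^ k * c ^ m * (c - l) <= (1 + y) ^ k * y ^ m * (y - l)).
  { apply Rmult_le_compat; try lra. apply Rmult_le_pos; lra. }
  assert (HN : Nf k m mu0 l y <= mu0 * ((1 + y) ^ k * y ^ m * (y - l)) * (y - l)).
  { replace (Nf k m mu0 l y) with (mu0 * ((1 + c) ^ k * c ^ m * (c - l)) * (y - l)) by lra.
    apply Rmult_le_compat_r; [lra|]. apply Rmult_le_compat_l; lra. }
  assert (Hk : 0 < (1 + y) ^ k) by (apply pow_lt; lra).
  assert (Hmy : 0 < y ^ m) by (apply pow_lt; lra).
  unfold Psi, Wf. rewrite <- tech_pow_Rmult.
  apply Rle_trans with (mu0 * (y - l) ^ 2 / (1 + y)).
  - unfold Rdiv. apply Rmult_le_reg_r with ((1 + y) * (1 + y) ^ k * y ^ m).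
    { apply Rmult_lt_0_compat; [apply Rmult_lt_0_compat|]; lra. }
    replace (Nf k m mu0 l y * / ((1 + y) * (1 + y) ^ k * y ^ m) * ((1 + y) * (1 + y) ^ k * y ^ m))
      with (Nf k m mu0 l y) by (field; repeat split; lra).
    replace (mu0 * (y - l) ^ 2 * / (1 + y) * ((1 + y) * (1 + y) ^ k * y ^ m))
      with (mu0 * ((1 + y) ^ k * y ^ m * (y - l)) * (y - l)) by (field; lra).
    exact HN.
  - assert (0 <= mu0 * (y - l) ^ 2) by (apply Rmult_le_pos; [lra| apply pow2_ge_0]).
    unfold Rdiv. rewrite <- (Rmult_1_r (mu0 * (y - l) ^ 2)) at 2.
    apply Rmult_le_compat_l; [lra|]. rewrite <- Rinv_1. apply Rinv_le_contravar; lra.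
Qed.

Theorem lemma3p8 (n m : nat) (a b lam : R) :
  (1 <= n)%nat -> 0 < a -> 0 < b ->
  mu m n a b 0 <= INR n ->
  0 <= lam < a ->
  mu m n a b lam * (1 + lam) = INR n ->
  convex_on (psi_tilde m n a b lam) (fun x => 0 < x) /\
  (forall x, lam <= x <= a -> psi_tilde m n a b lam x <= b / a * x).
Proof.
  intros Hn Ha Hb _ [Hl Hla] Hmu.
  destruct n as [|k]; [lia|].
  set (mu0 := mu m (S k) a b lam) in *.
  assert (Hpsi : forall x, psi_tilde m (S k) a b lam x = Psi k m mu0 lam x).
  { intros x. unfold psi_tilde, Psi, Nf, Wf. replace (S k - 1)%nat with k by lia. reflexivity. }
  pose proof (mu_pos k mu0 lam Hmu Hl) as Hm.
  assert (Hconv : convex_on (psi_tilde m (S k) a b lam) (fun x => 0 < x)).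
  { apply convex_from_d2 with (f1 := dPsi k m mu0 lam) (f2 := fun x => cf k m x * Kf k m mu0 lam x).
    - intros x Hx. eapply is_derive_ext; [|apply (dPsi_ok k m mu0 lam Hmu x Hx)].
      intros; symmetry; apply Hpsi.
    - intros x Hx. apply (ddPsi k m mu0 lam Hmu x Hx).
    - intros x Hx. apply Rmult_le_pos; [|apply (Kf_nonneg k m mu0 lam Hmu Hl x Hx)].
      unfold cf. pose proof (pos_INR (S k)). pose proof (pos_INR m).
      assert (0 <= INR (S k) / (1 + x) ^ 2).
      { unfold Rdiv. apply Rmult_le_pos; [lra|]. left. apply Rinv_0_lt_compat, pow_lt. lra. }
      assert (0 <= INR m / x ^ 2).
      { unfold Rdiv. apply Rmult_le_pos; [lra|]. left. apply Rinv_0_lt_compat, pow_lt. lra. }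
      pose proof (pow2_ge_0 (rf k m x)). lra. }
  split; [exact Hconv|].
  assert (Hpl : psi_tilde m (S k) a b lam lam = 0).
  { rewrite Hpsi. unfold Psi. rewrite N_l. unfold Rdiv. ring. }
  assert (HI : 0 < Iint m (S k) lam a).
  { unfold Iint. apply RInt_gt_0; [lra| |].
    - intros t Ht. apply Rmult_lt_0_compat; apply pow_lt; lra.
    - intros t Ht. apply (@ex_derive_continuous R_AbsRing R_NormedModule). auto_derive. auto. }
  assert (Hpa : psi_tilde m (S k) a b lam a = b).
  { rewrite Hpsi. unfold Psi, Nf, Wf. unfold mu0, mu. replace (S k - 1)%nat with k by lia.
    assert (0 < (1 + a) ^ S k) by (apply pow_lt; lra).
    assert (0 < a ^ m) by (apply pow_lt; lra).
    field. repeat split; lra. }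
  intros x [Hx1 Hx2].
  destruct (Req_dec x lam) as [->|Hxl]; [rewrite Hpl; unfold Rdiv; apply Rmult_le_pos; [apply Rmult_le_pos; [lra|left; apply Rinv_0_lt_compat; lra]|lra]|].
  destruct (Req_dec x a) as [->|Hxa]; [rewrite Hpa; right; field; lra|].
  assert (Hx : lam < x < a) by lra.
  apply Rnot_lt_le. intro Hcon.
  set (d := psi_tilde m (S k) a b lam x - b / a * x).
  assert (Hd : 0 < d) by (unfold d; lra).
  set (h := Rmin ((x - lam) / 2) (Rmin 1 (d / (2 * mu0)))).
  assert (Hh1 : 0 < h).
  { unfold h. apply Rmin_glb_lt; [lra|]. apply Rmin_glb_lt; [lra|].
    unfold Rdiv. apply Rmult_lt_0_compat; [lra|]. apply Rinv_0_lt_compat; lra. }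
  assert (Hh2 : h <= (x - lam) / 2) by apply Rmin_l.
  assert (Hh3 : h <= 1) by (eapply Rle_trans; [apply Rmin_r|apply Rmin_l]).
  assert (Hh4 : h <= d / (2 * mu0)) by (eapply Rle_trans; [apply Rmin_r|apply Rmin_r]).
  set (y := lam + h).
  assert (Hy : lam < y < x) by (unfold y; lra).
  assert (Hpy : psi_tilde m (S k) a b lam y <= d / 2).
  { rewrite Hpsi. eapply Rle_trans; [apply (Psi_bound k m mu0 lam Hmu Hl y); lra|].
    replace (y - lam) with h by (unfold y; ring).
    assert (mu0 * h <= d / 2).
    { apply Rmult_le_reg_r with (/ mu0); [apply Rinv_0_lt_compat; lra|].
      replace (mu0 * h * / mu0) with h by (field; lra).
      replace (d / 2 * / mu0) with (d / (2 * mu0)) by (field; lra). lra. }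
    assert (h * h <= h) by nra. assert (mu0 * h ^ 2 <= mu0 * h) by (simpl; rewrite Rmult_1_r; apply Rmult_le_compat_l; lra). lra. }
  assert (Hpy0 : 0 <= psi_tilde m (S k) a b lam y) by (rewrite Hpsi; apply Psi_nonneg; auto; lra).
  set (t := (a - x) / (a - y)).
  assert (Ht : 0 <= t <= 1).
  { unfold t. split.
    - unfold Rdiv. apply Rmult_le_pos; [lra|]. left; apply Rinv_0_lt_compat; lra.
    - apply Rmult_le_reg_r with (a - y); [lra|]. unfold Rdiv.
      rewrite Rmult_assoc, Rinv_l by lra. lra. }
  pose proof (Hconv y a t ltac:(lra) ltac:(lra) Ht) as Hc.
  replace (t * y + (1 - t) * a) with x in Hc by (unfold t; field; lra).
  rewrite Hpa in Hc.
  assert (H1t : (1 - t) * b <= b / a * x).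
  { assert (E : b / a * x - (1 - t) * b = b * y * (a - x) / (a * (a - y))) by (unfold t; field; lra).
    assert (0 <= b * y * (a - x) / (a * (a - y))).
    { unfold Rdiv. apply Rmult_le_pos; [apply Rmult_le_pos; [apply Rmult_le_pos|]; lra|].
      left; apply Rinv_0_lt_compat. apply Rmult_lt_0_compat; lra. }
    lra. }
  assert (t * psi_tilde m (S k) a b lam y <= psi_tilde m (S k) a b lam y) by nra.
  unfold d in *. lra.
Qed.
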